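(* Let $\alpha>0$. Then there exists a unique $\tilde\theta_\alpha\in(0,\theta^+_\alpha)\cap(0,\frac\pi4)$ such that $L(\alpha,\tilde\theta_\alpha)=0$.
   Context: For $\alpha>0$ and $\theta\in\mathbb{R}$ set $C_{\alpha,\theta}=\frac{\sin(2\theta)}{2\alpha}$ and $P_{\alpha,\theta}(x)=\alpha^2+\cos(2\theta)x^2-C_{\alpha,\theta}^2x^4$. Let $\theta^+_\alpha=\pi/2$ if $\alpha>1$, and $\theta^+_\alpha=\frac12\arccos(1-2\alpha^2)$ if $\alpha\le1$. Let $\Omega=\{(\alpha,\theta):\alpha>0,|\theta|<\theta^+_\alpha\}$; on $\Omega$ one has $P_{\alpha,\theta}>0$ on $[-1,1]$. For $(\alpha,\theta)\in\Omega$ define $$L(\alpha,\theta)=\int_{-1}^1\frac{2\alpha C_{\alpha,\theta}^2x^2-\alpha\cos(2\theta)+C_{\alpha,\theta}^2x^2\sqrt{P_{\alpha,\theta}(x)}}{\sqrt{(1-x^2)P_{\alpha,\theta}(x)}\,\big(\alpha+\sqrt{P_{\alpha,\theta}(x)}\big)}\,dx.$$ *)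

(* Defs.v *)
From Stdlib Require Import Reals.
From Coquelicot Require Import Coquelicot.
Open Scope R_scope.

Definition Cc (alpha theta : R) : R := sin (2 * theta) / (2 * alpha).

Definition Pp (alpha theta x : R) : R :=
  alpha ^ 2 + cos (2 * theta) * x ^ 2 - (Cc alpha theta) ^ 2 * x ^ 4.

Definition theta_plus (alpha : R) : R :=
  if Rlt_dec 1 alpha then PI / 2 else / 2 * acos (1 - 2 * alpha ^ 2).

Definition L_integrand (alpha theta x : R) : R :=
  (2 * alpha * (Cc alpha theta) ^ 2 * x ^ 2 - alpha * cos (2 * theta)
     + (Cc alpha theta) ^ 2 * x ^ 2 * sqrt (Pp alpha theta x))
  / (sqrt ((1 - x ^ 2) * Pp alpha theta x) * (alpha + sqrt (Pp alpha theta x))).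

Definition L (alpha theta : R) : R :=
  RInt_gen (L_integrand alpha theta) (at_right (-1)) (at_left 1).

(* Main.v *)
Require Import Defs.
From Stdlib Require Import Reals Lra Psatz.
From Coquelicot Require Import Coquelicot.
Open Scope R_scope.

Definition Hf (a th t : R) : R :=
  (2 * a * (Cc a th) ^ 2 * (sin t) ^ 2 - a * cos (2 * th)
     + (Cc a th) ^ 2 * (sin t) ^ 2 * sqrt (Pp a th (sin t)))
  / (sqrt (Pp a th (sin t)) * (a + sqrt (Pp a th (sin t)))).

Lemma c2_pow f x y n : continuity_2d_pt f x y -> continuity_2d_pt (fun u v => f u v ^ n) x y.
Proof.
  intros H; induction n as [|n IH].
  - simpl. apply continuity_2d_pt_const.
  - simpl. apply continuity_2d_pt_mult; auto.
Qed.

Lemma c2_to1 f x y : continuity_2d_pt f x y -> continuity_pt (fun v => f x v) y.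
Proof.
  intros H eps Heps. destruct (H (mkposreal eps Heps)) as [d Hd].
  exists d; split; [apply cond_pos|]. intros z [_ Hz]. simpl in *. unfold R_dist in *.
  apply Hd. rewrite Rminus_eq_0, Rabs_R0; apply cond_pos. exact Hz.
Qed.

Lemma c2_to1' f x y : continuity_2d_pt f x y -> continuity_pt (fun u => f u y) x.
Proof.
  intros H eps Heps. destruct (H (mkposreal eps Heps)) as [d Hd].
  exists d; split; [apply cond_pos|]. intros z [_ Hz]. simpl in *. unfold R_dist in *.
  apply Hd. exact Hz. rewrite Rminus_eq_0, Rabs_R0; apply cond_pos.
Qed.

Lemma Pp_pos a th x : 0 < a -> 1 - 2 * a ^ 2 < cos (2 * th) -> -1 <= x <= 1 -> 0 < Pp a th x.
Proof.
  intros Ha Hc Hx. unfold Pp, Cc.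
  set (c := cos (2*th)) in *. set (S := sin (2*th)).
  assert (HS : S ^ 2 = 1 - c ^ 2) by (unfold S, c; pose proof (sin2_cos2 (2*th)); unfold Rsqr in *; nra).
  replace (a ^ 2 + c * x ^ 2 - (S / (2 * a)) ^ 2 * x ^ 4) with
      ((4 * a ^ 4 + 4 * a ^ 2 * c * x ^ 2 - S ^ 2 * (x ^ 2) ^ 2) / (4 * a ^ 2))
    by (field; lra).
  set (u := x ^ 2).
  assert (Hu0 : 0 <= u) by (unfold u; nra).
  assert (Hu1 : u <= 1) by (unfold u; nra).
  apply Rdiv_lt_0_compat; [|nra]. rewrite HS.
  assert (Hc1 : c <= 1) by (unfold c; apply COS_bound).
  assert (K : 0 < 4 * a ^ 4 + 4 * a ^ 2 * c - 1 + c ^ 2) by nra.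
  assert (u ^ 2 <= u) by nra.
  assert (0 <= 1 - c ^ 2) by (unfold c; pose proof (COS_bound (2*th)); nra).
  assert (E : 4 * a ^ 4 + 4 * a ^ 2 * c * u - (1 - c ^ 2) * u ^ 2 =
    (1 - u) * (4 * a ^ 4) + u * (4 * a ^ 4 + 4 * a ^ 2 * c - 1 + c ^ 2) + (1 - c ^ 2) * (u - u ^ 2)) by ring.
  rewrite E.
  assert (0 < a ^ 4) by (apply pow_lt; lra).
  assert (0 <= (1 - c ^ 2) * (u - u ^ 2)) by (apply Rmult_le_pos; lra).
  destruct (Rle_lt_or_eq_dec u 1 Hu1) as [Hl|He].
  - assert (0 < (1 - u) * (4 * a ^ 4)) by (apply Rmult_lt_0_compat; lra).
    assert (0 <= u * (4 * a ^ 4 + 4 * a ^ 2 * c - 1 + c ^ 2)) by (apply Rmult_le_pos; lra).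
    lra.
  - rewrite He. lra.
Qed.

Lemma c2_p p x y : continuity_pt p x -> continuity_2d_pt (fun u v => p u) x y.
Proof. intros H. apply (continuity_1d_2d_pt_comp p (fun u v => u)); auto. apply continuity_2d_pt_id1. Qed.

Lemma c2_sinp p x y : continuity_pt p x -> continuity_2d_pt (fun u v => sin (2 * p u)) x y.
Proof. intros H. apply (continuity_1d_2d_pt_comp sin (fun u v => 2 * p u)). apply continuity_sin.
  apply continuity_2d_pt_mult. apply continuity_2d_pt_const. now apply c2_p. Qed.

Lemma c2_cosp p x y : continuity_pt p x -> continuity_2d_pt (fun u v => cos (2 * p u)) x y.
Proof. intros H. apply (continuity_1d_2d_pt_comp cos (fun u v => 2 * p u)). apply continuity_cos.
  apply continuity_2d_pt_mult. apply continuity_2d_pt_const. now apply c2_p. Qed.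

Lemma c2_sinv x y : continuity_2d_pt (fun u v => sin v) x y.
Proof. apply (continuity_1d_2d_pt_comp sin (fun u v => v)). apply continuity_sin. apply continuity_2d_pt_id2. Qed.

Ltac c2 H := repeat first [ apply (c2_sinp _ _ _ H) | apply (c2_cosp _ _ _ H) | apply c2_sinv
  | apply continuity_2d_pt_minus | apply continuity_2d_pt_plus | apply continuity_2d_pt_opp | apply continuity_2d_pt_mult
  | apply c2_pow | apply continuity_2d_pt_const ].

Lemma Hf_c2 a p th0 t0 : 0 < a -> continuity_pt p th0 -> 0 < Pp a (p th0) (sin t0) ->
  continuity_2d_pt (fun th t => Hf a (p th) t) th0 t0.
Proof.
  intros Ha Hp HP.
  assert (HPc : continuity_2d_pt (fun th t => Pp a (p th) (sin t)) th0 t0).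
  { unfold Pp, Cc, Rdiv. c2 Hp. }
  assert (HSc : continuity_2d_pt (fun th t => sqrt (Pp a (p th) (sin t))) th0 t0).
  { apply (continuity_1d_2d_pt_comp sqrt (fun th t => Pp a (p th) (sin t))); auto.
    apply continuity_pt_sqrt; lra. }
  assert (0 < sqrt (Pp a (p th0) (sin t0))) by (apply sqrt_lt_R0; auto).
  unfold Hf, Rdiv at 1. apply continuity_2d_pt_mult.
  - unfold Cc, Rdiv. c2 Hp; apply HSc.
  - apply continuity_2d_pt_inv.
    + apply continuity_2d_pt_mult; auto. apply continuity_2d_pt_plus; auto. apply continuity_2d_pt_const.
    + apply Rgt_not_eq. apply Rmult_lt_0_compat; lra.
Qed.

Lemma asin_lt_mono x y : -1 <= x <= 1 -> -1 <= y <= 1 -> x < y -> asin x < asin y.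
Proof.
  intros Hx Hy Hxy. destruct (Rlt_le_dec (asin x) (asin y)) as [|H]; auto.
  exfalso. pose proof (asin_bound x). pose proof (asin_bound y).
  destruct (Rle_lt_or_eq_dec _ _ H) as [H3|H3].
  - pose proof (sin_increasing_1 (asin y) (asin x)) as K.
    rewrite !sin_asin in K by lra. assert (x < x) by (apply Rlt_trans with y; auto; apply K; lra). lra.
  - apply (f_equal sin) in H3. rewrite !sin_asin in H3 by lra. lra.
Qed.

Lemma asin_near_m1 e : 0 < e -> exists d, 0 < d /\ forall y, -1 < y < -1 + d -> asin y < -(PI/2) + e.
Proof.
  intros He. set (e' := Rmin e 1).
  assert (He' : 0 < e' <= 1) by (unfold e'; split; [apply Rmin_glb_lt; lra | apply Rmin_r]).
  assert (e' <= e) by apply Rmin_l.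
  pose proof PI2_1.
  assert (Hc : cos e' < 1) by (rewrite <- cos_0; apply cos_decreasing_1; lra).
  assert (Hc0 : 0 < cos e') by (apply cos_gt_0; lra).
  exists (1 - cos e'). split; [lra|]. intros y Hy.
  assert (E : asin (- cos e') = -(PI/2) + e').
  { rewrite <- sin_shift, <- sin_neg. rewrite asin_sin; lra. }
  assert (asin y < asin (- cos e')) by (apply asin_lt_mono; lra). lra.
Qed.

Lemma asin_right : filterlim asin (at_right (-1)) (locally (-(PI/2))).
Proof.
  apply filterlim_locally. intros eps. destruct (asin_near_m1 eps (cond_pos eps)) as [d [Hd H]].
  exists (mkposreal d Hd). intros y Hb Hy. simpl in Hb. unfold ball; simpl; unfold AbsRing_ball, abs, minus, plus, opp; simpl.
  unfold ball in Hb; simpl in Hb; unfold AbsRing_ball, abs, minus, plus, opp in Hb; simpl in Hb.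
  apply Rabs_def2 in Hb. pose proof (asin_bound y). specialize (H y ltac:(lra)).
  apply Rabs_def1; lra.
Qed.

Lemma asin_left : filterlim asin (at_left 1) (locally (PI/2)).
Proof.
  apply filterlim_locally. intros eps. destruct (asin_near_m1 eps (cond_pos eps)) as [d [Hd H]].
  exists (mkposreal d Hd). intros y Hb Hy. simpl in Hb. unfold ball; simpl; unfold AbsRing_ball, abs, minus, plus, opp; simpl.
  unfold ball in Hb; simpl in Hb; unfold AbsRing_ball, abs, minus, plus, opp in Hb; simpl in Hb.
  apply Rabs_def2 in Hb. pose proof (asin_bound (-y)). specialize (H (-y) ltac:(lra)).
  rewrite asin_opp in H, H0.
  apply Rabs_def1; lra.
Qed.

Definition good a th := 1 - 2 * a ^ 2 < cos (2 * th).

Lemma c2_id2 x y : continuity_2d_pt (fun u v => v) x y.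
Proof. apply continuity_2d_pt_id2. Qed.

Lemma Li_c2 a p th0 x0 : 0 < a -> continuity_pt p th0 -> 0 < Pp a (p th0) x0 -> 0 < 1 - x0 ^ 2 ->
  continuity_2d_pt (fun th x => L_integrand a (p th) x) th0 x0.
Proof.
  intros Ha Hp HP H1.
  assert (HPc : continuity_2d_pt (fun th x => Pp a (p th) x) th0 x0).
  { unfold Pp, Cc, Rdiv. c2 Hp; apply c2_id2. }
  assert (HSc : continuity_2d_pt (fun th x => sqrt (Pp a (p th) x)) th0 x0).
  { apply (continuity_1d_2d_pt_comp sqrt (fun th x => Pp a (p th) x)); auto.
    apply continuity_pt_sqrt; lra. }
  assert (0 < sqrt (Pp a (p th0) x0)) by (apply sqrt_lt_R0; auto).
  assert (0 < (1 - x0^2) * Pp a (p th0) x0) by (apply Rmult_lt_0_compat; auto).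
  assert (HS2 : continuity_2d_pt (fun th x => sqrt ((1 - x ^ 2) * Pp a (p th) x)) th0 x0).
  { apply (continuity_1d_2d_pt_comp sqrt (fun th x => (1 - x ^ 2) * Pp a (p th) x)).
    apply continuity_pt_sqrt; lra. apply continuity_2d_pt_mult; auto.
    apply continuity_2d_pt_minus. apply continuity_2d_pt_const. apply c2_pow, c2_id2. }
  assert (0 < sqrt ((1 - x0^2) * Pp a (p th0) x0)) by (apply sqrt_lt_R0; auto).
  unfold L_integrand, Rdiv at 1. apply continuity_2d_pt_mult.
  - unfold Cc, Rdiv. c2 Hp; first [apply HSc | apply c2_id2].
  - apply continuity_2d_pt_inv.
    + apply continuity_2d_pt_mult; auto. apply continuity_2d_pt_plus; auto. apply continuity_2d_pt_const.
    + apply Rgt_not_eq. apply Rmult_lt_0_compat; lra.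
Qed.

Lemma cpt_id x : continuity_pt (fun u => u) x.
Proof. apply continuity_pt_id. Qed.

Lemma Hf_cont a th t : 0 < a -> good a th -> continuous (Hf a th) t.
Proof.
  intros Ha Hg. apply continuity_pt_filterlim.
  apply (c2_to1 (fun th t => Hf a ((fun u => u) th) t)).
  apply Hf_c2; auto. apply cpt_id. apply Pp_pos; auto. apply SIN_bound.
Qed.

Lemma Li_cont a th x : 0 < a -> good a th -> -1 < x < 1 -> continuous (L_integrand a th) x.
Proof.
  intros Ha Hg Hx. apply continuity_pt_filterlim.
  apply (c2_to1 (fun th x => L_integrand a ((fun u => u) th) x)).
  apply Li_c2; auto. apply cpt_id. apply Pp_pos; auto; lra. nra.
Qed.

Lemma Hf_exRInt a th x y : 0 < a -> good a th -> ex_RInt (Hf a th) x y.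
Proof. intros Ha Hg. apply (ex_RInt_continuous (V:=R_CompleteNormedModule)). intros; apply Hf_cont; auto. Qed.

Lemma asin_deriv x : -1 < x < 1 -> is_derive asin x (/ sqrt (1 - x ^ 2)).
Proof.
  intros Hx. apply is_derive_Reals.
  apply derive_pt_eq_1 with (derivable_pt_asin x Hx).
  rewrite derive_pt_asin. unfold Rsqr. replace (x^2) with (x*x) by ring. unfold Rdiv; ring.

Qed.

Lemma L_eq a th : 0 < a -> good a th -> L a th = RInt (Hf a th) (-(PI/2)) (PI/2).
Proof.
  intros Ha Hg.
  set (F := fun y => RInt (Hf a th) 0 y).
  assert (HF : forall y, is_derive F y (Hf a th y)).
  { intros y. apply is_derive_RInt with 0.
    - apply filter_forall. intros b. apply RInt_correct, Hf_exRInt; auto.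
    - apply Hf_cont; auto. }
  assert (HFc : forall y, continuous F y) by (intros y; apply (ex_derive_continuous (K:=R_AbsRing) (V:=R_NormedModule)); eexists; apply HF).
  set (Phi := fun x => F (asin x)).
  assert (HPhi : forall x, -1 < x < 1 -> is_derive Phi x (L_integrand a th x)).
  { intros x Hx. unfold Phi.
    assert (K := is_derive_comp F asin x _ _ (HF (asin x)) (asin_deriv x Hx)).
    replace (L_integrand a th x) with (scal (/ sqrt (1 - x ^ 2)) (Hf a th (asin x))); auto.
    unfold scal; simpl; unfold mult; simpl.
    unfold Hf, L_integrand. rewrite sin_asin by lra.
    assert (0 < Pp a th x) by (apply Pp_pos; auto; lra).
    assert (0 < sqrt (Pp a th x)) by (apply sqrt_lt_R0; auto).
    assert (0 < sqrt (1 - x^2)) by (apply sqrt_lt_R0; nra).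
    rewrite sqrt_mult by nra. replace (x * (x * 1)) with (x ^ 2) by ring. field. repeat split; lra. }
  assert (Hgen : is_RInt_gen (Derive Phi) (at_right (-1)) (at_left 1) (F (PI/2) - F (-(PI/2)))).
  { apply is_RInt_gen_Derive.
    - exists (fun x => -1 < x < 0) (fun x => 0 < x < 1).
      + exists (mkposreal 1 Rlt_0_1). intros y Hb Hy.
        unfold ball in Hb; simpl in Hb; unfold AbsRing_ball, abs, minus, plus, opp in Hb; simpl in Hb.
        apply Rabs_def2 in Hb. lra.
      + exists (mkposreal 1 Rlt_0_1). intros y Hb Hy.
        unfold ball in Hb; simpl in Hb; unfold AbsRing_ball, abs, minus, plus, opp in Hb; simpl in Hb.
        apply Rabs_def2 in Hb. lra.
      + intros u v Hu Hv x Hx. simpl in Hx. rewrite Rmin_left in Hx by lra. rewrite Rmax_right in Hx by lra.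
        eexists; apply HPhi; lra.
    - exists (fun x => -1 < x < 0) (fun x => 0 < x < 1).
      + exists (mkposreal 1 Rlt_0_1). intros y Hb Hy.
        unfold ball in Hb; simpl in Hb; unfold AbsRing_ball, abs, minus, plus, opp in Hb; simpl in Hb.
        apply Rabs_def2 in Hb. lra.
      + exists (mkposreal 1 Rlt_0_1). intros y Hb Hy.
        unfold ball in Hb; simpl in Hb; unfold AbsRing_ball, abs, minus, plus, opp in Hb; simpl in Hb.
        apply Rabs_def2 in Hb. lra.
      + intros u v Hu Hv x Hx. simpl in Hx. rewrite Rmin_left in Hx by lra. rewrite Rmax_right in Hx by lra.
        apply continuous_ext_loc with (L_integrand a th).
        * assert (Hd : 0 < Rmin (x + 1) (1 - x)) by (apply Rmin_glb_lt; lra).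
          exists (mkposreal _ Hd). intros y Hb. simpl in Hb.
          unfold ball in Hb; simpl in Hb; unfold AbsRing_ball, abs, minus, plus, opp in Hb; simpl in Hb.
          apply Rabs_def2 in Hb. pose proof (Rmin_l (x+1) (1-x)). pose proof (Rmin_r (x+1) (1-x)).
          symmetry. apply is_derive_unique, HPhi. lra.
        * apply Li_cont; auto; lra.
    - unfold Phi. eapply filterlim_comp. apply asin_right. apply HFc.
    - unfold Phi. eapply filterlim_comp. apply asin_left. apply HFc. }
  unfold L. rewrite (is_RInt_gen_unique (L_integrand a th) (F (PI/2) - F (-(PI/2)))).
  - unfold F. rewrite <- (RInt_Chasles (Hf a th) (-(PI/2)) 0 (PI/2)) by (apply Hf_exRInt; auto).
    rewrite <- (opp_RInt_swap (Hf a th) (-(PI/2)) 0) by (apply Hf_exRInt; auto).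
    unfold plus, opp; simpl. ring.
  - eapply is_RInt_gen_ext; [| exact Hgen].
    exists (fun x => -1 < x < 0) (fun x => 0 < x < 1).
    + exists (mkposreal 1 Rlt_0_1). intros y Hb Hy.
      unfold ball in Hb; simpl in Hb; unfold AbsRing_ball, abs, minus, plus, opp in Hb; simpl in Hb.
      apply Rabs_def2 in Hb. lra.
    + exists (mkposreal 1 Rlt_0_1). intros y Hb Hy.
      unfold ball in Hb; simpl in Hb; unfold AbsRing_ball, abs, minus, plus, opp in Hb; simpl in Hb.
      apply Rabs_def2 in Hb. lra.
    + intros u v Hu Hv x Hx. simpl in Hx. rewrite Rmin_left in Hx by lra. rewrite Rmax_right in Hx by lra.
      apply is_derive_unique, HPhi. lra.
Qed.

Lemma RInt_param_cont (K : R -> R -> R) a b c r : a <= b -> 0 < r ->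
  (forall t, a <= t <= b -> continuity_2d_pt K c t) ->
  (forall th, Rabs (th - c) < r -> ex_RInt (K th) a b) ->
  continuity_pt (fun th => RInt (K th) a b) c.
Proof.
  intros Hab Hr Hc Hex eps Heps.
  assert (He' : 0 < eps / (b - a + 1)) by (apply Rdiv_lt_0_compat; lra).
  destruct (uniform_continuity_2d_1d' K a b c Hc (mkposreal _ He')) as [d Hd].
  assert (Hd' : 0 < Rmin d r) by (apply Rmin_glb_lt; auto; apply cond_pos).
  exists (Rmin d r). split; auto. intros th [_ Hth]. simpl in Hth. unfold R_dist in *. simpl.
  pose proof (Rmin_l d r). pose proof (Rmin_r d r).
  assert (E1 : ex_RInt (K th) a b) by (apply Hex; lra).
  assert (E2 : ex_RInt (K c) a b) by (apply Hex; rewrite Rminus_eq_0, Rabs_R0; auto).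
  unfold Rdist. replace (RInt (K th) a b - RInt (K c) a b) with (minus (RInt (K th) a b) (RInt (K c) a b)) by reflexivity.
  rewrite <- (RInt_minus (V:=R_CompleteNormedModule)) by auto.
  eapply Rle_lt_trans. apply abs_RInt_le_const with (M := eps / (b - a + 1)); auto.
  - apply (ex_RInt_minus (V:=R_CompleteNormedModule)); auto.
  - intros t Ht. unfold minus, plus, opp; simpl. left.
    apply Rabs_def2 in Hth.
    apply (Hd t c t th); try lra. rewrite Rminus_eq_0, Rabs_R0; apply cond_pos.
  - apply Rlt_le_trans with ((b - a + 1) * (eps / (b - a + 1))).
    + apply Rmult_lt_compat_r; lra.
    + right. field. lra.
Qed.

Lemma alg_form a A c u s : 0 < a -> 0 < u -> 0 < s -> s * s = a ^ 2 + c * u - A * u ^ 2 ->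
  (2 * a * A * u - a * c + A * u * s) / (s * (a + s)) = ((A * u ^ 2 + a ^ 2) / (u * s)) - a / u.
Proof.
  intros Ha Hu Hs Hss.
  assert (E : (2 * a * A * u - a * c + A * u * s) * (u * s) - ((A * u ^ 2 + a ^ 2) - a * s) * (s * (a + s))
      = a * s * (s * s - (a ^ 2 + c * u - A * u ^ 2))) by ring.
  rewrite Hss, Rminus_eq_0, Rmult_0_r in E.
  apply Rminus_diag_uniq in E.
  replace ((A * u ^ 2 + a ^ 2) / (u * s) - a / u) with (((A * u ^ 2 + a ^ 2) - a * s) / (u * s)) by (field; lra).
  apply (Rmult_eq_reg_r ((u * s) * (s * (a + s)))); [| apply Rgt_not_eq; apply Rmult_lt_0_compat; apply Rmult_lt_0_compat; lra].
  replace ((2 * a * A * u - a * c + A * u * s) / (s * (a + s)) * (u * s * (s * (a + s))))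
    with ((2 * a * A * u - a * c + A * u * s) * (u * s)) by (field; lra).
  rewrite E. field. lra.
Qed.

Lemma alg_mono a A1 A2 c1 c2 u : 0 < a -> 0 <= A1 <= A2 -> c2 < c1 -> 0 <= u <= 1 ->
  0 < a ^ 2 + c1 * u - A1 * u ^ 2 -> 0 < a ^ 2 + c2 * u - A2 * u ^ 2 ->
  (2 * a * A1 * u - a * c1 + A1 * u * sqrt (a ^ 2 + c1 * u - A1 * u ^ 2))
    / (sqrt (a ^ 2 + c1 * u - A1 * u ^ 2) * (a + sqrt (a ^ 2 + c1 * u - A1 * u ^ 2)))
  < (2 * a * A2 * u - a * c2 + A2 * u * sqrt (a ^ 2 + c2 * u - A2 * u ^ 2))
    / (sqrt (a ^ 2 + c2 * u - A2 * u ^ 2) * (a + sqrt (a ^ 2 + c2 * u - A2 * u ^ 2))).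
Proof.
  intros Ha HA Hc Hu HP1 HP2.
  set (s1 := sqrt (a ^ 2 + c1 * u - A1 * u ^ 2)). set (s2 := sqrt (a ^ 2 + c2 * u - A2 * u ^ 2)).
  assert (Hs1 : 0 < s1) by (apply sqrt_lt_R0; auto).
  assert (Hs2 : 0 < s2) by (apply sqrt_lt_R0; auto).
  assert (Hss1 : s1 * s1 = a ^ 2 + c1 * u - A1 * u ^ 2) by (apply sqrt_sqrt; lra).
  assert (Hss2 : s2 * s2 = a ^ 2 + c2 * u - A2 * u ^ 2) by (apply sqrt_sqrt; lra).
  destruct (Rle_lt_or_eq_dec 0 u (proj1 Hu)) as [Hu0|Hu0].
  - rewrite (alg_form a A1 c1 u s1), (alg_form a A2 c2 u s2) by auto.
    assert (Hlt : s2 < s1).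
    { apply sqrt_lt_1; try lra. assert (A1 * u ^ 2 <= A2 * u ^ 2) by (apply Rmult_le_compat_r; nra). nra. }
    apply Rplus_lt_compat_r.
    apply Rmult_lt_reg_r with ((u * s1) * (u * s2)); [apply Rmult_lt_0_compat; apply Rmult_lt_0_compat; lra|].
    replace ((A1 * u ^ 2 + a ^ 2) / (u * s1) * (u * s1 * (u * s2))) with ((A1 * u ^ 2 + a ^ 2) * (u * s2)) by (field; lra).
    replace ((A2 * u ^ 2 + a ^ 2) / (u * s2) * (u * s1 * (u * s2))) with ((A2 * u ^ 2 + a ^ 2) * (u * s1)) by (field; lra).
    assert (A1 * u ^ 2 <= A2 * u ^ 2) by (apply Rmult_le_compat_r; nra).
    assert (0 < u * s2) by nra. assert (u * s2 < u * s1) by nra.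
    apply Rle_lt_trans with ((A2 * u ^ 2 + a ^ 2) * (u * s2)).
    + apply Rmult_le_compat_r; lra.
    + apply Rmult_lt_compat_l; nra.
  - subst u. unfold s1, s2. replace (a ^ 2 + c1 * 0 - A1 * 0 ^ 2) with (a * a) by ring.
    replace (a ^ 2 + c2 * 0 - A2 * 0 ^ 2) with (a * a) by ring. rewrite sqrt_square by lra.
    apply Rmult_lt_reg_r with (a * (a + a)); [nra|].
    unfold Rdiv. rewrite !Rmult_assoc, Rinv_l, !Rmult_1_r by nra. nra.
Qed.

Lemma Pp_eq a th x : Pp a th x = a ^ 2 + cos (2 * th) * x ^ 2 - Cc a th ^ 2 * (x ^ 2) ^ 2.
Proof. unfold Pp. ring. Qed.

Lemma Hf_mono a th1 th2 t : 0 < a -> 0 <= th1 -> th1 < th2 -> th2 <= PI / 4 ->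
  good a th1 -> good a th2 -> Hf a th1 t < Hf a th2 t.
Proof.
  intros Ha H1 H12 H2 G1 G2. pose proof PI_RGT_0.
  assert (P1 : 0 < Pp a th1 (sin t)) by (apply Pp_pos; auto; apply SIN_bound).
  assert (P2 : 0 < Pp a th2 (sin t)) by (apply Pp_pos; auto; apply SIN_bound).
  rewrite Pp_eq in P1, P2. unfold Hf. rewrite !Pp_eq.
  apply alg_mono; auto.
  - split. apply pow2_ge_0. unfold Cc.
    assert (0 <= sin (2 * th1)) by (apply sin_ge_0; lra).
    assert (sin (2 * th1) < sin (2 * th2)) by (apply sin_increasing_1; lra).
    unfold Rdiv. rewrite !Rpow_mult_distr. apply Rmult_le_compat_r. apply pow2_ge_0. nra.
  - apply cos_decreasing_1; lra.
  - pose proof (SIN_bound t). split. apply pow2_ge_0. nra.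
Qed.

Definition G a th := RInt (Hf a th) (-(PI/2)) (PI/2).

Lemma good_open a th0 : good a th0 -> exists r, 0 < r /\ forall th, Rabs (th - th0) < r -> good a th.
Proof.
  intros Hg. unfold good in *.
  assert (Hc : continuity_pt (fun th => cos (2 * th)) th0).
  { apply (continuity_pt_comp (fun th => 2 * th) cos). apply continuity_pt_mult. apply continuity_pt_const; intros ? ?; reflexivity. apply continuity_pt_id. apply continuity_cos. }
  destruct (Hc (cos (2 * th0) - (1 - 2 * a ^ 2))) as [r [Hr H]]; [lra|].
  exists r. split; auto. intros th Hth.
  destruct (Req_dec th th0) as [->|Hne]; auto.
  specialize (H th). simpl in H. unfold R_dist, D_x, no_cond in H.
  assert (K : Rabs (cos (2 * th) - cos (2 * th0)) < cos (2 * th0) - (1 - 2 * a ^ 2)) by (apply H; split; auto).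
  apply Rabs_def2 in K. lra.
Qed.

Lemma G_cont a th0 : 0 < a -> good a th0 -> continuity_pt (G a) th0.
Proof.
  intros Ha Hg. destruct (good_open a th0 Hg) as [r [Hr Hgr]].
  unfold G. apply RInt_param_cont with r.
  - pose proof PI_RGT_0; lra.
  - auto.
  - intros t _. apply (Hf_c2 a (fun u => u)); auto. apply continuity_pt_id. apply Pp_pos; auto. apply SIN_bound.
  - intros th Hth. apply Hf_exRInt; auto.
Qed.

Lemma G_mono a th1 th2 : 0 < a -> 0 <= th1 -> th1 < th2 -> th2 <= PI / 4 ->
  good a th1 -> good a th2 -> G a th1 < G a th2.
Proof.
  intros. unfold G. pose proof PI_RGT_0. apply RInt_lt.
  - lra.
  - intros; apply Hf_cont; auto.
  - intros; apply Hf_cont; auto.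
  - intros; apply Hf_mono; auto.
Qed.

Lemma good0 a : 0 < a -> good a 0.
Proof. intros Ha. unfold good. rewrite Rmult_0_r, cos_0. nra. Qed.

Lemma G0_neg a : 0 < a -> G a 0 < 0.
Proof.
  intros Ha. pose proof PI_RGT_0.
  assert (E : RInt (fun _ : R => 0) (-(PI/2)) (PI/2) = 0).
  { rewrite RInt_const. unfold scal; simpl; unfold mult; simpl. ring. }
  apply Rlt_le_trans with (RInt (fun _ : R => 0) (-(PI/2)) (PI/2)); [|right; exact E]. unfold G. apply RInt_lt.
  - lra.
  - intros; apply continuous_const.
  - intros; apply Hf_cont; auto. apply good0; auto.
  - intros t _. unfold Hf, Cc. rewrite Rmult_0_r, sin_0, cos_0.
    assert (0 < Pp a 0 (sin t)) by (apply Pp_pos; auto; [apply good0; auto | apply SIN_bound]).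
    assert (0 < sqrt (Pp a 0 (sin t))) by (apply sqrt_lt_R0; auto).
    replace (2 * a * (0 / (2 * a)) ^ 2 * sin t ^ 2 - a * 1 + (0 / (2 * a)) ^ 2 * sin t ^ 2 * sqrt (Pp a 0 (sin t)))
      with (- a) by (field; lra).
    apply Rlt_div_l. apply Rmult_lt_0_compat; lra. lra.
Qed.

Lemma good_pi4 a : 1 < 2 * a ^ 2 -> good a (PI / 4).
Proof. intros H. unfold good. replace (2 * (PI / 4)) with (PI / 2) by field. rewrite cos_PI2. lra. Qed.

Lemma Hf_pi4_pos a t : 0 < a -> 1 < 2 * a ^ 2 -> sin t <> 0 -> 0 < Hf a (PI / 4) t.
Proof.
  intros Ha H1 Hs.
  assert (0 < Pp a (PI/4) (sin t)) by (apply Pp_pos; auto; [apply good_pi4; auto | apply SIN_bound]).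
  assert (0 < sqrt (Pp a (PI/4) (sin t))) by (apply sqrt_lt_R0; auto).
  unfold Hf, Cc. replace (2 * (PI / 4)) with (PI / 2) by field. rewrite cos_PI2, sin_PI2.
  assert (0 < sin t ^ 2) by (replace (sin t ^ 2) with (Rsqr (sin t)) by (unfold Rsqr; ring); apply Rsqr_pos_lt; auto).
  apply Rdiv_lt_0_compat; [|apply Rmult_lt_0_compat; lra].
  assert (0 < (1 / (2 * a)) ^ 2) by (apply pow_lt; apply Rdiv_lt_0_compat; lra).
  assert (0 < (1 / (2 * a)) ^ 2 * sin t ^ 2) by (apply Rmult_lt_0_compat; auto).
  assert (0 < (1 / (2 * a)) ^ 2 * sin t ^ 2 * sqrt (Pp a (PI / 4) (sin t))) by (apply Rmult_lt_0_compat; auto).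
  nra.
Qed.

Lemma Gpi4_pos a : 0 < a -> 1 < 2 * a ^ 2 -> 0 < G a (PI / 4).
Proof.
  intros Ha H1. pose proof PI_RGT_0. unfold G.
  rewrite <- (RInt_Chasles (Hf a (PI/4)) (-(PI/2)) 0 (PI/2)) by (apply Hf_exRInt; auto; apply good_pi4; auto).
  unfold plus; simpl. apply Rplus_lt_0_compat; apply RInt_gt_0; try lra.
  - intros t Ht. apply Hf_pi4_pos; auto. apply Rlt_not_eq. apply sin_lt_0_var; lra.
  - intros; apply Hf_cont; auto; apply good_pi4; auto.
  - intros t Ht. apply Hf_pi4_pos; auto. apply Rgt_not_eq. apply sin_gt_0; lra.
  - intros; apply Hf_cont; auto; apply good_pi4; auto.
Qed.

Lemma Hf_cont_pt a th t : 0 < a -> 0 < Pp a th (sin t) -> continuous (Hf a th) t.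
Proof.
  intros Ha HP. apply continuity_pt_filterlim.
  apply (c2_to1 (fun th t => Hf a ((fun u => u) th) t)).
  apply Hf_c2; auto. apply cpt_id.
Qed.

Lemma Hf_nonneg a th t : 0 < a -> 0 < Pp a th (sin t) -> cos (2 * th) <= Cc a th ^ 2 * sin t ^ 2 ->
  0 <= Hf a th t.
Proof.
  intros Ha HP Hm. assert (0 < sqrt (Pp a th (sin t))) by (apply sqrt_lt_R0; auto).
  unfold Hf. apply Rmult_le_pos; [|left; apply Rinv_0_lt_compat; apply Rmult_lt_0_compat; lra].
  assert (0 <= Cc a th ^ 2 * sin t ^ 2) by (apply Rmult_le_pos; apply pow2_ge_0).
  assert (0 <= Cc a th ^ 2 * sin t ^ 2 * sqrt (Pp a th (sin t))) by (apply Rmult_le_pos; lra).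
  nra.
Qed.

Lemma lb_alg a A c u s : 0 < a -> 0 <= A -> 0 <= c -> 0 <= u -> 0 < s ->
  (A * u - c) / s <= (2 * a * A * u - a * c + A * u * s) / (s * (a + s)).
Proof.
  intros Ha HA Hc Hu Hs.
  replace ((A * u - c) / s) with ((A * u - c) * (a + s) / (s * (a + s))) by (field; lra).
  unfold Rdiv. apply Rmult_le_compat_r. left; apply Rinv_0_lt_compat; nra.
  assert (0 <= a * A * u) by (apply Rmult_le_pos; [apply Rmult_le_pos|]; lra).
  assert (0 <= c * s) by nra. nra.
Qed.

Section Small.
Variable a : R.
Hypothesis Ha : 0 < a.
Hypothesis Hsmall : 2 * a ^ 2 <= 1.

Definition c0 := 1 - 2 * a ^ 2.
Definition phi := / 2 * acos c0.

Lemma c0_range : 0 <= c0 < 1.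
Proof. unfold c0. split; nra. Qed.

Lemma cos_phi : cos (2 * phi) = c0.
Proof. unfold phi. replace (2 * (/ 2 * acos c0)) with (acos c0) by field. apply cos_acos. pose proof c0_range; lra. Qed.

Lemma phi_range : 0 < phi <= PI / 4.
Proof.
  pose proof c0_range. unfold phi. pose proof (acos_bound c0). split.
  - destruct (Rle_lt_or_eq_dec 0 (acos c0) (proj1 H0)) as [H1|H1]; [lra|].
    exfalso. apply (f_equal cos) in H1. rewrite cos_acos in H1 by lra. rewrite cos_0 in H1. lra.
  - rewrite acos_asin by lra. assert (0 <= asin c0).
    { destruct (Rle_lt_or_eq_dec 0 c0 (proj1 H)) as [H1|H1].
      - rewrite <- asin_0. left. apply asin_lt_mono; lra.
      - rewrite <- H1, asin_0. lra. }
    lra.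
Qed.

Lemma Cc_phi : Cc a phi ^ 2 = 1 - a ^ 2.
Proof.
  unfold Cc. pose proof (sin2_cos2 (2 * phi)). rewrite cos_phi in H. unfold Rsqr in H. unfold c0 in H.
  replace ((sin (2 * phi) / (2 * a)) ^ 2) with ((sin (2 * phi) * sin (2 * phi)) / (4 * a ^ 2)) by (field; lra).
  replace (sin (2 * phi) * sin (2 * phi)) with (1 - (1 - 2 * a ^ 2) * (1 - 2 * a ^ 2)) by lra.
  field. lra.
Qed.

Lemma Pp_phi x : Pp a phi x = (1 - x ^ 2) * (a ^ 2 + (1 - a ^ 2) * x ^ 2).
Proof. rewrite Pp_eq, Cc_phi, cos_phi. unfold c0. ring. Qed.

Lemma good_lt_phi th : 0 <= th < phi -> good a th.
Proof.
  intros Hth. pose proof phi_range. unfold good. fold c0. rewrite <- cos_phi.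
  pose proof PI_RGT_0. apply cos_decreasing_1; lra.
Qed.

End Small.

Lemma Hf_phi_lb a t : 0 < a -> 2 * a ^ 2 <= 1 -> -(PI/2) < t < PI/2 ->
  a ^ 2 / cos t - 1 / a <= Hf a (phi a) t.
Proof.
  intros Ha Hs Ht. assert (Hk : 0 < cos t) by (apply cos_gt_0; lra).
  assert (0 <= c0 a < 1) by (unfold c0; split; nra).
  set (k := cos t) in *. set (x := sin t).
  assert (Hx : x ^ 2 = 1 - k ^ 2) by (unfold x, k; pose proof (sin2_cos2 t); unfold Rsqr in *; nra).
  set (W := a ^ 2 + (1 - a ^ 2) * x ^ 2).
  assert (HW1 : a ^ 2 <= W) by (unfold W; assert (0 <= (1 - a ^ 2) * x ^ 2) by (apply Rmult_le_pos; nra); lra).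
  assert (HW2 : W <= 1) by (unfold W; nra).
  set (w := sqrt W).
  assert (Hw1 : a <= w) by (unfold w; rewrite <- (sqrt_pow2 a) by lra; apply sqrt_le_1_alt; lra).
  assert (Hw2 : w <= 1) by (unfold w; rewrite <- sqrt_1; apply sqrt_le_1_alt; lra).
  assert (Hsq : sqrt (Pp a (phi a) x) = k * w).
  { rewrite Pp_phi by auto. fold W. rewrite Hx. replace (1 - (1 - k ^ 2)) with (k ^ 2) by ring.
    rewrite sqrt_mult_alt by nra. rewrite sqrt_pow2 by lra. reflexivity. }
  unfold Hf. fold x. rewrite Cc_phi by auto. rewrite cos_phi by auto.
  eapply Rle_trans; [|apply lb_alg].
  2-6: try (rewrite Hsq); nra.
  rewrite Hsq, Hx.
    apply Rmult_le_reg_r with (k * w * a); [apply Rmult_lt_0_compat; [apply Rmult_lt_0_compat|]; lra|].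
    replace ((a ^ 2 / k - 1 / a) * (k * w * a)) with (a ^ 3 * w - k * w) by (field; lra).
    replace (((1 - a ^ 2) * (1 - k ^ 2) - c0 a) / (k * w) * (k * w * a)) with (a ^ 3 - a * (1 - a ^ 2) * k ^ 2)
      by (unfold c0; field; nra).
    assert (k <= 1) by (unfold k; apply COS_bound).
    assert (a ^ 3 * w <= a ^ 3) by (assert (0 < a ^ 3) by (apply pow_lt; lra); nra).
    assert (0 <= (1 - a ^ 2) * k <= 1) by (split; [apply Rmult_le_pos; nra | nra]).
    assert (a * ((1 - a ^ 2) * k) <= a * 1) by (apply Rmult_le_compat_l; lra).
    assert (a * (1 - a ^ 2) * k <= w) by (rewrite Rmult_assoc; lra).
    nra.
Qed.

Lemma int_lb a T : 0 < a -> 0 < T < PI / 2 ->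
  is_RInt (fun t => a ^ 2 / cos t - 1 / a) (-T) T (a ^ 2 * (ln (1 + sin T) - ln (1 - sin T)) - 2 * T / a).
Proof.
  intros Ha HT.
  set (f := fun t => a ^ 2 * (ln (1 + sin t) - ln (cos t)) - t / a).
  assert (E : a ^ 2 * (ln (1 + sin T) - ln (1 - sin T)) - 2 * T / a = minus (f T) (f (-T))).
  { unfold f, minus, plus, opp; simpl. rewrite sin_neg, cos_neg. replace (1 + - sin T) with (1 - sin T) by ring. field. lra. }
  rewrite E. apply (is_RInt_derive (V:=R_CompleteNormedModule)).
  - intros x Hx. rewrite Rmin_left in Hx by lra. rewrite Rmax_right in Hx by lra.
    assert (0 < cos x) by (apply cos_gt_0; lra).
    assert (-1 < sin x) by (assert (sin (-(PI/2)) < sin x) by (apply sin_increasing_1; lra); rewrite sin_neg, sin_PI2 in *; lra).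
    unfold f. auto_derive.
    + repeat split; lra.
    + pose proof (sin2_cos2 x). unfold Rsqr in *.
      assert (K : 1 * cos x * / (1 + sin x) = (1 - sin x) / cos x).
      { apply Rmult_eq_reg_r with (cos x * (1 + sin x)); [| apply Rgt_not_eq; apply Rmult_lt_0_compat; lra].
        replace (1 * cos x * / (1 + sin x) * (cos x * (1 + sin x))) with (cos x * cos x) by (field; lra).
        replace ((1 - sin x) / cos x * (cos x * (1 + sin x))) with (1 - sin x * sin x) by (field; lra). lra. }
      rewrite K. field. lra.
  - intros y Hy. rewrite Rmin_left in Hy by lra. rewrite Rmax_right in Hy by lra.
    assert (0 < cos y) by (apply cos_gt_0; lra).
    apply continuity_pt_filterlim. apply continuity_pt_minus.
    + apply continuity_pt_div. apply continuity_pt_const; intros ? ?; reflexivity. apply continuity_cos. lra.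
    + apply continuity_pt_const; intros ? ?; reflexivity.
Qed.

Definition eta a := exp (- (4 / a ^ 3)) * (a ^ 2 / 4).
Definition TT a := asin (1 - eta a).

Lemma eta_range a : 0 < a -> 2 * a ^ 2 <= 1 -> 0 < eta a <= a ^ 2 / 4.
Proof.
  intros Ha Hs. unfold eta. assert (0 < exp (- (4 / a ^ 3))) by apply exp_pos.
  assert (exp (- (4 / a ^ 3)) <= 1).
  { rewrite <- exp_0. left; apply exp_increasing. assert (0 < 4 / a ^ 3) by (apply Rdiv_lt_0_compat; [lra | apply pow_lt; lra]). lra. }
  assert (0 < a ^ 2 / 4) by nra. split. nra. nra.
Qed.

Lemma TT_range a : 0 < a -> 2 * a ^ 2 <= 1 -> 0 < TT a < PI / 2 /\ sin (TT a) = 1 - eta a.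
Proof.
  intros Ha Hs. pose proof (eta_range a Ha Hs). unfold TT. split; [split|].
  - rewrite <- asin_0. apply asin_lt_mono; nra.
  - rewrite <- asin_1. apply asin_lt_mono; nra.
  - apply sin_asin. nra.
Qed.

Lemma Pp_phi_pos a t : 0 < a -> 2 * a ^ 2 <= 1 -> -(PI/2) < t < PI/2 -> 0 < Pp a (phi a) (sin t).
Proof.
  intros Ha Hs Ht. rewrite Pp_phi by auto. assert (0 < cos t) by (apply cos_gt_0; lra).
  pose proof (sin2_cos2 t). unfold Rsqr in *. apply Rmult_lt_0_compat. nra.
  assert (0 <= (1 - a ^ 2) * sin t ^ 2) by (apply Rmult_le_pos; nra). nra.
Qed.

Lemma IT_pos a : 0 < a -> 2 * a ^ 2 <= 1 -> 0 < RInt (Hf a (phi a)) (- TT a) (TT a).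
Proof.
  intros Ha Hs. destruct (TT_range a Ha Hs) as [HT HsT]. pose proof (eta_range a Ha Hs).
  set (T := TT a) in *.
  assert (Hi := int_lb a T Ha HT).
  apply Rlt_le_trans with (RInt (fun t => a ^ 2 / cos t - 1 / a) (- T) T).
  - rewrite (is_RInt_unique _ _ _ _ Hi). rewrite HsT.
    assert (L1 : 0 <= ln (1 + (1 - eta a))) by (rewrite <- ln_1; apply ln_le; lra).
    assert (L2 : ln (1 - (1 - eta a)) < - (4 / a ^ 3)).
    { replace (1 - (1 - eta a)) with (eta a) by ring. unfold eta.
      rewrite ln_mult by (try apply exp_pos; nra). rewrite ln_exp.
      assert (ln (a ^ 2 / 4) < 0) by (rewrite <- ln_1; apply ln_increasing; nra). lra. }
    pose proof PI_4.
    assert (a ^ 2 * (4 / a ^ 3) = 4 / a) by (field; lra).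
    assert (2 * T / a < 4 / a) by (apply Rmult_lt_compat_r; [apply Rinv_0_lt_compat; lra | lra]).
    assert (a ^ 2 * (4 / a ^ 3) < a ^ 2 * (ln (1 + (1 - eta a)) - ln (1 - (1 - eta a))))
      by (apply Rmult_lt_compat_l; [nra | lra]).
    lra.
  - apply RInt_le; try lra.
    + eexists; apply Hi.
    + apply (ex_RInt_continuous (V:=R_CompleteNormedModule)). intros t Ht.
      rewrite Rmin_left in Ht by lra. rewrite Rmax_right in Ht by lra.
      apply Hf_cont_pt; auto. apply Pp_phi_pos; auto; lra.
    + intros t Ht. apply Hf_phi_lb; auto; lra.
Qed.

Lemma Rmin_cont c x0 : continuity_pt (fun x => Rmin x c) x0.
Proof.
  intros eps Heps. exists eps. split; auto. intros x [_ Hx]. simpl in *. unfold R_dist in *.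
  unfold Rmin. destruct (Rle_dec x c); destruct (Rle_dec x0 c); apply Rabs_def2 in Hx; apply Rabs_def1; lra.
Qed.

Lemma Rmin_same x : Rmin x x = x.
Proof. unfold Rmin; destruct (Rle_dec x x); auto. Qed.

Lemma GT_cont a : 0 < a -> 2 * a ^ 2 <= 1 ->
  continuity_pt (fun th => RInt (Hf a (Rmin th (phi a))) (- TT a) (TT a)) (phi a).
Proof.
  intros Ha Hs. destruct (TT_range a Ha Hs) as [HT HsT]. pose proof (phi_range a Ha Hs).
  apply (RInt_param_cont (fun th t => Hf a (Rmin th (phi a)) t)) with (phi a).
  - lra.
  - lra.
  - intros t Ht. apply (Hf_c2 a (fun th => Rmin th (phi a))); auto. apply Rmin_cont.
    rewrite Rmin_same. apply Pp_phi_pos; auto; lra.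
  - intros th Hth. apply Rabs_def2 in Hth.
    apply (ex_RInt_continuous (V:=R_CompleteNormedModule)). intros t Ht.
    rewrite Rmin_left in Ht by lra. rewrite Rmax_right in Ht by lra.
    apply Hf_cont_pt; auto.
    unfold Rmin at 1. destruct (Rle_dec th (phi a)) as [Hle|Hle].
    + destruct (Rle_lt_or_eq_dec _ _ Hle) as [Hl|He].
      * apply Pp_pos; auto. apply good_lt_phi; auto; lra. apply SIN_bound.
      * rewrite He. apply Pp_phi_pos; auto; lra.
    + apply Pp_phi_pos; auto; lra.
Qed.

Lemma margin_cont a K th0 : 0 < a -> continuity_pt (fun th => Cc a th ^ 2 * K - cos (2 * th)) th0.
Proof.
  intros Ha.
  apply (c2_to1' (fun th t => Cc a ((fun u => u) th) ^ 2 * K - cos (2 * (fun u => u) th)) th0 0).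
  assert (Hp : continuity_pt (fun u => u) th0) by apply continuity_pt_id.
  unfold Cc, Rdiv. c2 Hp.
Qed.

Lemma exists_pos a : 0 < a -> 2 * a ^ 2 <= 1 -> exists th0, 0 < th0 < phi a /\ 0 < G a th0.
Proof.
  intros Ha Hs. destruct (TT_range a Ha Hs) as [HT HsT]. pose proof (phi_range a Ha Hs).
  pose proof (eta_range a Ha Hs). pose proof PI_RGT_0.
  set (T := TT a) in *. set (ph := phi a) in *. set (e := eta a) in *.
  set (IT := RInt (Hf a ph) (- T) T).
  assert (HIT : 0 < IT) by (apply IT_pos; auto).
  destruct (GT_cont a Ha Hs (IT / 2)) as [d1 [Hd1 Hc1]]; [lra|].
  set (m := fun th => Cc a th ^ 2 * (1 - e) ^ 2 - cos (2 * th)).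
  assert (Hm : 0 < m ph).
  { unfold m, ph. rewrite Cc_phi, cos_phi by auto. unfold c0.
    assert ((1 - a ^ 2) * (1 - (1 - e) ^ 2) <= 2 * e) by nra. nra. }
  destruct (margin_cont a ((1 - e) ^ 2) ph Ha (m ph)) as [d2 [Hd2 Hc2]]; [lra|].
  set (d := Rmin (Rmin d1 d2) ph).
  assert (Hd : 0 < d) by (unfold d; apply Rmin_glb_lt; [apply Rmin_glb_lt|]; lra).
  assert (d <= ph) by apply Rmin_r.
  assert (d <= d1) by (unfold d; eapply Rle_trans; [apply Rmin_l | apply Rmin_l]).
  assert (d <= d2) by (unfold d; eapply Rle_trans; [apply Rmin_l | apply Rmin_r]).
  set (th0 := ph - d / 2).
  assert (Hth0 : 0 < th0 < ph) by (unfold th0; lra).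
  assert (Hdist : Rabs (th0 - ph) = d / 2) by (unfold th0; replace (ph - d / 2 - ph) with (- (d / 2)) by ring; rewrite Rabs_Ropp; apply Rabs_right; lra).
  exists th0. split; auto.
  assert (Hg : good a th0) by (apply good_lt_phi; auto; fold ph; lra).
  assert (Hm0 : 0 < m th0).
  { assert (K : Rabs (m th0 - m ph) < m ph).
    { apply (Hc2 th0). fold ph. split. split; [exact I | lra]. simpl. unfold R_dist. lra. }
    apply Rabs_def2 in K. lra. }
  assert (HG : 0 < RInt (Hf a th0) (- T) T).
  { assert (K : Rabs (RInt (Hf a (Rmin th0 ph)) (- T) T - RInt (Hf a (Rmin ph ph)) (- T) T) < IT / 2).
    { apply (Hc1 th0). fold ph. split. split; [exact I | lra]. simpl. unfold R_dist. lra. }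
    rewrite Rmin_same in K. rewrite Rmin_left in K by lra. fold IT in K.
    apply Rabs_def2 in K. lra. }
  unfold G.
  rewrite <- (RInt_Chasles (Hf a th0) (-(PI/2)) T (PI/2)) by (apply Hf_exRInt; auto).
  rewrite <- (RInt_Chasles (Hf a th0) (-(PI/2)) (-T) T) by (apply Hf_exRInt; auto).
  unfold plus; simpl.
  assert (Hnn : forall t, (1 - e) ^ 2 <= sin t ^ 2 -> 0 <= Hf a th0 t).
  { intros t Ht. apply Hf_nonneg; auto. apply Pp_pos; auto. apply SIN_bound.
    assert (Cc a th0 ^ 2 * (1 - e) ^ 2 <= Cc a th0 ^ 2 * sin t ^ 2) by (apply Rmult_le_compat_l; [apply pow2_ge_0 | auto]).
    unfold m in Hm0. lra. }
  assert (A1 : 0 <= RInt (Hf a th0) (-(PI/2)) (-T)).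
  { apply RInt_ge_0; [lra | apply Hf_exRInt; auto |]. intros t Ht. apply Hnn.
    assert (Hst : sin t < sin (- T)) by (apply sin_increasing_1; lra). rewrite sin_neg in Hst. nra. }
  assert (A2 : 0 <= RInt (Hf a th0) T (PI/2)).
  { apply RInt_ge_0; [lra | apply Hf_exRInt; auto |]. intros t Ht. apply Hnn.
    assert (Hst : sin T < sin t) by (apply sin_increasing_1; lra). nra. }
  lra.
Qed.

Lemma good_of a th : 0 < a -> 0 <= th -> th < theta_plus a -> th <= PI / 4 -> good a th.
Proof.
  intros Ha H0 H1 H2. pose proof PI_RGT_0. unfold good. unfold theta_plus in H1.
  destruct (Rlt_dec 1 a) as [Hb|Hb].
  - assert (0 <= cos (2 * th)) by (apply cos_ge_0; lra). nra.
  - assert (Hr : -1 <= 1 - 2 * a ^ 2 <= 1) by nra.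
    pose proof (acos_bound (1 - 2 * a ^ 2)).
    rewrite <- (cos_acos (1 - 2 * a ^ 2)) at 1 by lra.
    apply cos_decreasing_1; lra.
Qed.

Lemma tp_big a : 0 < a -> 1 < 2 * a ^ 2 -> PI / 4 < theta_plus a.
Proof.
  intros Ha H. pose proof PI_RGT_0. unfold theta_plus. destruct (Rlt_dec 1 a); [lra|].
  assert (Hr : -1 <= 1 - 2 * a ^ 2 < 0) by nra.
  rewrite acos_asin by lra.
  assert (asin (1 - 2 * a ^ 2) < 0) by (rewrite <- asin_0; apply asin_lt_mono; lra). lra.
Qed.

Lemma tp_small a : 0 < a -> 2 * a ^ 2 <= 1 -> theta_plus a = phi a.
Proof.
  intros Ha H. unfold theta_plus, phi, c0. destruct (Rlt_dec 1 a); [nra|]. reflexivity.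
Qed.

Theorem lemma4p5 (alpha : R) (Halpha : 0 < alpha) :
  exists! theta : R,
    (0 < theta < theta_plus alpha /\ theta < PI / 4) /\ L alpha theta = 0.
Proof.
  set (a := alpha) in *. pose proof PI_RGT_0.
  assert (Ex : exists z, (0 < z < theta_plus a /\ z < PI / 4) /\ G a z = 0).
  { destruct (Rlt_le_dec 1 (2 * a ^ 2)) as [Hb|Hs].
    - destruct (Ranalysis5.IVT_interv (G a) 0 (PI / 4)) as [z [Hz Gz]].
      + intros th Hth. apply G_cont; auto. unfold good.
        assert (0 <= cos (2 * th)) by (apply cos_ge_0; lra). nra.
      + lra.
      + apply G0_neg; auto.
      + apply Gpi4_pos; auto.
      + exists z. pose proof (tp_big a Halpha Hb).
        assert (z <> 0) by (intros ->; pose proof (G0_neg a Halpha); lra).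
        assert (z <> PI / 4) by (intros ->; pose proof (Gpi4_pos a Halpha Hb); lra).
        split; auto. split; [split|]; lra.
    - destruct (exists_pos a Halpha Hs) as [th0 [Hth0 Gth0]].
      pose proof (phi_range a Halpha Hs).
      destruct (Ranalysis5.IVT_interv (G a) 0 th0) as [z [Hz Gz]].
      + intros th Hth. apply G_cont; auto. apply good_lt_phi; auto; lra.
      + lra.
      + apply G0_neg; auto.
      + auto.
      + exists z. rewrite tp_small by auto.
        assert (z <> 0) by (intros ->; pose proof (G0_neg a Halpha); lra).
        assert (z <> th0) by (intros ->; lra).
        split; auto. split; [split|]; lra. }
  destruct Ex as [z [Hz Gz]].
  assert (Hgz : good a z) by (apply good_of; auto; lra).
  exists z. split.
  - split; auto. rewrite L_eq; auto.
  - intros y [Hy Ly]. assert (Hgy : good a y) by (apply good_of; auto; lra).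
    rewrite L_eq in Ly by auto. fold (G a y) in Ly.
    destruct (Rtotal_order z y) as [Hl|[He|Hl]]; auto.
    + pose proof (G_mono a z y Halpha ltac:(lra) Hl ltac:(lra) Hgz Hgy). lra.
    + pose proof (G_mono a y z Halpha ltac:(lra) Hl ltac:(lra) Hgy Hgz). lra.
Qed.
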